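(* A subshift $X\subseteq A^{\mathbb{N}}$ over a finite alphabet $A$ is a sofic shift with a unique periodic point if and only if it is $1$-codable.
   Context: Subshifts are one-sided; a sofic shift is the set of labels of right-infinite paths in a finite edge-labeled graph; a periodic point is a point of the form $u^\omega$, $u$ nonempty. The ANS $\mathcal{U}$ has language $0^*$ with radix order, so $\mathrm{rep}(n)=0^n$; tuples are represented by left-padding with a new symbol $\#$ to equal length; $Y\subseteq\mathbb{N}^d$ is $1$-recognizable if $\mathrm{rep}(Y)$ is regular. For $\mathbf{y}\in\mathbb{N}^{\mathbb{N}}$: $\sum\mathbf{y}=\sum_iy_i$; if $\sum\mathbf{y}=d<\infty$, $\nu(\mathbf{y})$ is the unique nondecreasing $(n_1,\dots,n_d)$ with $y_j=|\{k:n_k=j\}|$ for all $j$. The coding dimension of $Y\subseteq\mathbb{N}^{\mathbb{N}}$ is the least $d$ with $\sum\mathbf{y}\le d$ for all $\mathbf{y}\in Y$, if it exists. $Y\subseteq\mathbb{N}^{\mathbb{N}}$ is weakly $1$-codable if for each $k$ the set $\{\nu(\mathbf{y}):\mathbf{y}\in Y,\sum\mathbf{y}\le k\}$ is $1$-recognizable in each dimension, and $1$-codable if moreover it has finite coding dimension. A set $Y\subseteq A^{\mathbb{N}}$ is (weakly) $1$-codable if there is a bijection $\pi\colon A\to\{0,\dots,|A|-1\}$ (applied letterwise) such that $\pi(Y)$ is (weakly) $1$-codable; $\pi^{-1}(0)$ is the zero symbol. *)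

(* Defs.v *)
From mathcomp Require Import all_boot.
Set Implicit Arguments. Unset Strict Implicit. Unset Printing Implicit Defensive.

Section Shifts.
Variable A : finType.

Definition shift_invariant (X : (nat -> A) -> Prop) : Prop :=
  forall x, X x -> X (fun n => x n.+1).

(* Closedness in the product (Cantor) topology: a point every prefix of
   which is a prefix of some point of X belongs to X. *)
Definition closed_shift (X : (nat -> A) -> Prop) : Prop :=
  forall x, (forall n, exists y, X y /\ forall i, i < n -> y i = x i) -> X x.

Definition subshift (X : (nat -> A) -> Prop) : Prop :=
  closed_shift X /\ shift_invariant X.

Definition sofic (X : (nat -> A) -> Prop) : Prop :=
  exists (nv ne : nat) (src tgt : 'I_ne -> 'I_nv) (lab : 'I_ne -> A),
    forall x : nat -> A,
      X x <-> exists e : nat -> 'I_ne,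
                (forall n, tgt (e n) = src (e n.+1)) /\
                (forall n, x n = lab (e n)).

(* x = u^omega with u nonempty, i.e. x is periodic with some period p > 0. *)
Definition periodic_point (x : nat -> A) : Prop :=
  exists p, 0 < p /\ forall n, x (n + p) = x n.

Definition unique_periodic (X : (nat -> A) -> Prop) : Prop :=
  exists x, [/\ X x, periodic_point x &
                forall y, X y -> periodic_point y -> forall n, y n = x n].
End Shifts.

Definition dfa_accepts (S : finType) (n : nat) (q0 : 'I_n)
  (delta : 'I_n -> S -> 'I_n) (F : pred 'I_n) (w : seq S) : bool :=
  F (foldl delta q0 w).

Definition regular (S : finType) (L : seq S -> Prop) : Prop :=
  exists (n : nat) (q0 : 'I_n) (delta : 'I_n -> S -> 'I_n) (F : pred 'I_n),
    forall w, L w <-> dfa_accepts q0 delta F w.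

(** * The unary ANS U: rep(n) = 0^n, tuples left-padded with '#'.
    Letters of the tuple alphabet {0,#}^d are encoded as {ffun 'I_d -> bool}
    with [true] standing for the symbol 0 and [false] for #. *)

Definition maxcomp (d : nat) (v : 'I_d -> nat) : nat := \max_(i < d) v i.

Definition rep_tuple (d : nat) (v : 'I_d -> nat) : seq {ffun 'I_d -> bool} :=
  let m := maxcomp v in
  mkseq (fun k => [ffun i => m - v i <= k]) m.

Definition one_recognizable (d : nat) (Y : ('I_d -> nat) -> Prop) : Prop :=
  regular (fun w : seq {ffun 'I_d -> bool} =>
             exists v, Y v /\ rep_tuple v = w).

Definition seq_sum_eq (y : nat -> nat) (s : nat) : Prop :=
  exists N, (forall i, N <= i -> y i = 0) /\ \sum_(i < N) y i = s.

Definition seq_sum_le (y : nat -> nat) (s : nat) : Prop :=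
  exists N, (forall i, N <= i -> y i = 0) /\ \sum_(i < N) y i <= s.

Definition is_nu (d : nat) (y : nat -> nat) (v : 'I_d -> nat) : Prop :=
  (forall i j : 'I_d, i <= j -> v i <= v j) /\
  (forall j, y j = #|[set k : 'I_d | v k == j]|).

(* For each k, the set {nu(y) : y in Y, sum y <= k} is 1-recognizable in
   each dimension d (its elements of dimension d are the nu(y) with sum y = d). *)
Definition weakly_one_codable_N (Y : (nat -> nat) -> Prop) : Prop :=
  forall k d : nat,
    one_recognizable (fun v : 'I_d -> nat =>
      exists y, [/\ Y y, seq_sum_eq y d, d <= k & is_nu y v]).

Definition finite_coding_dim (Y : (nat -> nat) -> Prop) : Prop :=
  exists d, forall y, Y y -> seq_sum_le y d.

Definition one_codable_N (Y : (nat -> nat) -> Prop) : Prop :=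
  weakly_one_codable_N Y /\ finite_coding_dim Y.

Definition letter_image (A : finType) (pi : A -> 'I_#|A|)
  (X : (nat -> A) -> Prop) : (nat -> nat) -> Prop :=
  fun y => exists x, X x /\ forall n, y n = nat_of_ord (pi (x n)).

Definition one_codable (A : finType) (X : (nat -> A) -> Prop) : Prop :=
  exists pi : A -> 'I_#|A|, bijective pi /\ one_codable_N (letter_image pi X).

(* Main.v *)
Require Import Defs.
From mathcomp Require Import all_boot zify.
From Stdlib Require Import ClassicalEpsilon FunctionalExtensionality.
Set Implicit Arguments. Unset Strict Implicit. Unset Printing Implicit Defensive.


Definition pb (P : Prop) : bool :=
  if excluded_middle_informative P then true else false.

Lemma pbP (P : Prop) : reflect P (pb P).
Proof. by rewrite /pb; case: excluded_middle_informative => h; constructor. Qed.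

Lemma pbE (P : Prop) : P -> pb P = true.
Proof. by move/pbP. Qed.

Section Coded.
Variable S : finType.

Definition rcoded (L : seq S -> Prop) : Prop :=
  exists (T : finType) (f : seq S -> T),
    forall u v, f u = f v -> forall w, L (u ++ w) <-> L (v ++ w).

Lemma regular_rcoded L : regular L -> rcoded L.
Proof.
case=> n [q0 [delta [F HL]]].
exists ('I_n : finType), (foldl delta q0) => u v huv w.
by rewrite !HL /dfa_accepts !foldl_cat huv.
Qed.

Lemma rcoded_ext (L L' : seq S -> Prop) :
  (forall w, L w <-> L' w) -> rcoded L -> rcoded L'.
Proof.
move=> E [T [f Hf]]; exists T, f => u v huv w.
by rewrite -!E; apply: Hf.
Qed.

Lemma regular_ext (L L' : seq S -> Prop) :
  (forall w, L w <-> L' w) -> regular L -> regular L'.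
Proof.
move=> E [n [q0 [d [F H]]]]; exists n, q0, d, F => w; by rewrite -E.
Qed.

Section Build.
Variables (L : seq S -> Prop) (T : finType) (f : seq S -> T).
Hypothesis Hf : forall u v, f u = f v -> forall w, L (u ++ w) <-> L (v ++ w).

Definition pick_rep (q : T) : seq S :=
  match excluded_middle_informative (exists u, f u = q) with
  | left H => proj1_sig (constructive_indefinite_description _ H)
  | right _ => [::]
  end.

Lemma pick_repP q u : f u = q -> f (pick_rep q) = q.
Proof.
move=> hu; rewrite /pick_rep; case: excluded_middle_informative => [H|[]]; last by exists u.
by case: constructive_indefinite_description.
Qed.

Definition bdelta (q : T) (a : S) : T := f (pick_rep q ++ [:: a]).

Lemma bfold w : exists u, foldl bdelta (f [::]) w = f u /\
   forall t, L (u ++ t) <-> L (w ++ t).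
Proof.
elim/last_ind: w => [|w a [u [hu hq]]]; first by exists [::].
rewrite -cats1 foldl_cat /= hu /bdelta.
exists (pick_rep (f u) ++ [:: a]); split => // t.
have e := pick_repP (erefl (f u)).
rewrite -!catA Hf // hq //.
Qed.

End Build.

Lemma rcoded_regular L : rcoded L -> regular L.
Proof.
case=> T [f Hf].
pose delta (i : 'I_#|T|) (a : S) := enum_rank (bdelta f (enum_val i) a).
pose F (i : 'I_#|T|) := pb (L (pick_rep f (enum_val i))).
exists #|T|, (enum_rank (f [::])), delta, F => w.
have E : forall q, foldl delta (enum_rank q) w = enum_rank (foldl (bdelta f) q w).
  elim: w => //= a w IH q; by rewrite /delta enum_rankK IH.
rewrite /dfa_accepts E /F enum_rankK.
have [u [hu hq]] := bfold Hf w.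
rewrite hu.
have e : L (pick_rep f (f u)) <-> L w.
  have := pick_repP (erefl (f u)).
  move/(Hf)/(_ [::]); rewrite !cats0 => e.
  rewrite e; move: (hq [::]); by rewrite !cats0.
by split => [h|/pbP/e //]; apply/pbP/e.
Qed.

Lemma rcoded_rev L : rcoded L -> rcoded (fun w => L (rev w)).
Proof.
case=> T [f Hf].
pose g (u : seq S) := [set c : T | pb (exists p, f p = c /\ L (p ++ rev u))].
have key : forall u w, (f (rev w) \in g u) <-> L (rev w ++ rev u).
  move=> u w; rewrite inE; split.
  - by move/pbP=> [p [hp hL]]; apply/(Hf _ _ hp).
  - by move=> h; apply/pbP; exists (rev w).
exists ({set T} : finType), g => u v huv w.
rewrite !rev_cat -key huv key //.
Qed.

Lemma rcoded_ord L : rcoded L ->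
  exists K (f : seq S -> 'I_K), forall u v, f u = f v -> forall w, L (u ++ w) <-> L (v ++ w).
Proof.
case=> T [f Hf]; exists #|T|, (fun u => enum_rank (f u)) => u v h.
by apply: Hf; apply: enum_rank_inj.
Qed.

End Coded.


Section Shift.
Variable A : finType.
Implicit Types (X : (nat -> A) -> Prop) (u w : seq A) (z : nat -> A).

Definition catp u z : nat -> A :=
  fun n => if n < size u then nth (z 0) u n else z (n - size u).

Lemma Xext X x y : X x -> (forall n, x n = y n) -> X y.
Proof. by move=> h e; have <- : x = y by apply: functional_extensionality. Qed.

Lemma catp_nil z n : catp [::] z n = z n.
Proof. by rewrite /catp /= subn0. Qed.

Lemma catp_cat u w z n : catp (u ++ w) z n = catp u (catp w z) n.
Proof.
rewrite /catp size_cat nth_cat.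
case: (ltnP n (size u)) => h1.
  by rewrite ltn_addr // (set_nth_default (catp w z 0)).
case: ifP => h2.
  have -> : n - size u < size w by lia.
  by [].
have -> : n - size u < size w = false by lia.
by rewrite subnDA.
Qed.

Lemma catp_lt u z z' n : n < size u -> catp u z n = catp u z' n.
Proof. by move=> h; rewrite /catp h (set_nth_default (z' 0)). Qed.

Lemma catp_mkseq (x : nat -> A) m z n : n < m -> catp (mkseq x m) z n = x n.
Proof. by move=> h; rewrite /catp size_mkseq h nth_mkseq. Qed.

Lemma catp_mkseq_shift (x : nat -> A) m n :
  catp (mkseq x m) (fun i => x (m + i)) n = x n.
Proof.
case: (ltnP n m) => h; first by rewrite catp_mkseq.
by rewrite /catp size_mkseq ltnNge h /=; congr x; lia.
Qed.

Lemma catp_size u z n : catp u z (size u + n) = z n.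
Proof. by rewrite /catp ltnNge leq_addr /=; congr z; lia. Qed.

Lemma catp_rcons u a z n : catp (rcons u a) z n = catp u (catp [:: a] z) n.
Proof. by rewrite -cats1 catp_cat. Qed.

Lemma shiftN X x m : shift_invariant X -> X x -> X (fun n => x (m + n)).
Proof.
move=> Hs; elim: m => [|m IH] hx.
  by apply: Xext hx _ => n.
apply: Xext (Hs _ (IH hx)) _ => n; congr x; lia.
Qed.

Lemma shift_catp X u z : shift_invariant X -> X (catp u z) -> X z.
Proof.
move=> Hs h; apply: Xext (shiftN (size u) Hs h) _ => n; exact: catp_size.
Qed.

Lemma closed_catp X u : closed_shift X -> closed_shift (fun z => X (catp u z)).
Proof.
move=> Hc z Hz; apply: Hc => n.
have [y [hy hyz]] := Hz n.
exists (catp u y); split => // i hi.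
case: (ltnP i (size u)) => h; first exact: catp_lt.
by rewrite /catp ltnNge h /=; apply: hyz; lia.
Qed.

Lemma sofic_of_fin X (V E : finType) (src tgt : E -> V) (lab : E -> A) :
  (forall x, X x <-> exists e : nat -> E,
       (forall n, tgt (e n) = src (e n.+1)) /\ (forall n, x n = lab (e n))) ->
  sofic X.
Proof.
move=> H.
exists #|V|, #|E|, (fun i => enum_rank (src (enum_val i))),
  (fun i => enum_rank (tgt (enum_val i))), (fun i => lab (enum_val i)) => x.
rewrite H; split.
- case=> e [he hl]; exists (fun n => enum_rank (e n)); split => n.
    by rewrite !enum_rankK he.
  by rewrite enum_rankK.
- case=> e [he hl]; exists (fun n => enum_val (e n)); split => n //.
  by apply: enum_rank_inj; apply: he.
Qed.

Definition fcoded X : Prop :=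
  exists (T : finType) (g : seq A -> T),
    forall u v, g u = g v -> forall z, X (catp u z) -> X (catp v z).

Section SoficGraph.
Variables (nv ne : nat) (src tgt : 'I_ne -> 'I_nv) (lab : 'I_ne -> A).

Definition reach u (V : 'I_nv) : Prop :=
  exists e : nat -> 'I_ne,
    [/\ (forall n, n.+1 < size u -> tgt (e n) = src (e n.+1)),
        (forall n, n < size u -> nth (lab (e n)) u n = lab (e n)) &
        (u = [::] \/ tgt (e (size u).-1) = V)].

Definition gfrom (V : 'I_nv) z : Prop :=
  exists e : nat -> 'I_ne,
    [/\ (forall n, tgt (e n) = src (e n.+1)), (forall n, z n = lab (e n)) &
        src (e 0) = V].

Lemma reach_split X u z :
  (forall x, X x <-> exists e : nat -> 'I_ne,
       (forall n, tgt (e n) = src (e n.+1)) /\ (forall n, x n = lab (e n))) ->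
  X (catp u z) <-> exists V, reach u V /\ gfrom V z.
Proof.
move=> H; rewrite H; split.
- case=> e [he hl].
  case: u hl => [|a u'] hl.
    exists (src (e 0)); split; first by exists e; split => //; left.
    by exists e; split => // n; rewrite -hl catp_nil.
  set u := a :: u' in hl *.
  exists (tgt (e (size u).-1)); split.
    exists e; split => //; last by right.
    move=> n hn; rewrite -hl /catp hn; exact: set_nth_default.
  exists (fun n => e (size u + n)); split.
  + by move=> n; rewrite he addnS.
  + by move=> n; rewrite -hl catp_size.
  + by rewrite addn0 he prednK.
- case=> V [[e1 [h1 h2 h3]] [e2 [h4 h5 h6]]].
  exists (fun n => if n < size u then e1 n else e2 (n - size u)); split => n.
  + case: (ltnP n.+1 (size u)) => hn.
      by rewrite ltnW // h1.
    case: (ltnP n (size u)) => hn'.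
      have en : n = (size u).-1 by lia.
      idtac.
      case: h3 => h3; first by rewrite h3 in hn'.
      by rewrite en h3 -h6; congr (src (e2 _)); lia.
    idtac.
    by rewrite h4; congr (src (e2 _)); lia.
  + rewrite /catp; case: ifP => hn.
      by rewrite (set_nth_default (lab (e1 n))) // h2.
    exact: h5.
Qed.
End SoficGraph.

Lemma sofic_fcoded X : sofic X -> fcoded X.
Proof.
case=> nv [ne [src [tgt [lab H]]]].
exists ({set 'I_nv} : finType), (fun u => [set V | pb (reach src tgt lab u V)]).
move=> u v huv z.
rewrite !(reach_split _ _ H) => -[V [hr hf]]; exists V; split => //.
have : V \in [set V | pb (reach src tgt lab u V)] by rewrite inE pbE.
by rewrite huv inE => /pbP.
Qed.

Lemma fcoded_sofic X : subshift X -> fcoded X -> sofic X.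
Proof.
case=> Hc Hs [T [g Hg]].
pose edge (t : T * A * T) : Prop :=
  exists u, [/\ g u = t.1.1, g (rcons u t.1.2) = t.2 &
                exists z, X (catp (rcons u t.1.2) z)].
pose E := {t : T * A * T | pb (edge t)}.
apply: (@sofic_of_fin X T E (fun t => (val t).1.1) (fun t => (val t).2)
          (fun t => (val t).1.2)) => x; split.
- move=> hx.
  have he : forall n, pb (edge (g (mkseq x n), x n, g (mkseq x n.+1))).
    move=> n; apply: pbE; exists (mkseq x n); rewrite /= -mkseqS; split => //.
    exists (fun i => x (n.+1 + i)); apply: Xext hx _ => i.
    by rewrite catp_mkseq_shift.
  by exists (fun n => exist (fun t => pb (edge t)) (g (mkseq x n), x n, g (mkseq x n.+1)) (he n)); split.
- case=> e [he hl].
  have hed : forall n, edge (val (e n)) by move=> n; exact: (elimT (pbP _) (valP (e n))).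
  pose U n := proj1_sig (constructive_indefinite_description _ (hed n)).
  have hU : forall n, [/\ g (U n) = (val (e n)).1.1,
       g (rcons (U n) (val (e n)).1.2) = (val (e n)).2 &
       exists z, X (catp (rcons (U n) (val (e n)).1.2) z)].
    by move=> n; rewrite /U; case: constructive_indefinite_description.
  have Q : forall m n, exists y, X (catp (U n) y) /\
             forall i, i < m -> y i = x (n + i).
    elim=> [|m IH] n.
      have [_ _ [z hz]] := hU n.
      exists (catp [:: (val (e n)).1.2] z); split => //.
      by apply: Xext hz _ => i; rewrite catp_rcons.
    have [y [hy hyx]] := IH n.+1.
    have [h1 _ _] := hU n.+1.
    have [_ h2 _] := hU n.
    have hy' : X (catp (rcons (U n) (val (e n)).1.2) y).
      apply: Hg hy; by rewrite h1 h2 -he.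
    exists (catp [:: (val (e n)).1.2] y); split.
      by apply: Xext hy' _ => i; rewrite catp_rcons.
    case=> [|i] hi; first by rewrite /catp /= hl addn0.
    have -> : catp [:: (val (e n)).1.2] y i.+1 = y i.
      by rewrite /catp /= subn1.
    by rewrite hyx // addnS.
  have : X (catp (U 0) x).
    have HC := closed_catp (u:=U 0) Hc; apply: HC => m.
    have [y [hy hyx]] := Q m 0; exists y; split => // i hi.
  exact: shift_catp.
Qed.

Lemma sofic_iff X : subshift X -> (sofic X <-> fcoded X).
Proof. move=> H; split; [exact: sofic_fcoded | exact: fcoded_sofic]. Qed.

End Shift.


Section Match.
Variables (A : finType) (pv : A -> nat).
Implicit Types (x y z : nat -> A) (u : seq A).

Definition Ssum x n := \sum_(p < n) pv (x p).
Definition lam d c : {ffun 'I_d -> bool} := [ffun i : 'I_d => c <= i].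

Definition Match d x (w : seq {ffun 'I_d -> bool}) : Prop :=
  [/\ forall j, j < size w -> nth (lam d 0) w j = lam d (Ssum x j.+1) /\ Ssum x j.+1 < d,
      Ssum x (size w).+1 = d & forall p, size w < p -> pv (x p) = 0].

Arguments Match d x w : clear implicits.
Arguments lam d c : clear implicits.

Lemma Ssum0 x : Ssum x 0 = 0.
Proof. by rewrite /Ssum big_ord0. Qed.

Lemma SsumS x n : Ssum x n.+1 = Ssum x n + pv (x n).
Proof. by rewrite /Ssum big_ord_recr. Qed.

Lemma Ssum_mono x m n : m <= n -> Ssum x m <= Ssum x n.
Proof.
move=> h; rewrite -(subnKC h); elim: (n - m) => [|k IH]; first by rewrite addn0.
by rewrite addnS SsumS (leq_trans IH) // leq_addr.
Qed.

Lemma Ssum_ext x y n : (forall p, p < n -> x p = y p) -> Ssum x n = Ssum y n.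
Proof.
move=> h; rewrite /Ssum; apply: eq_bigr => i _; by rewrite h.
Qed.

Lemma lam_inj d c c' : c <= d -> c' <= d -> lam d c = lam d c' -> c = c'.
Proof.
move=> hc hc' e.
wlog lt : c c' hc hc' e / c < c'.
  move=> W; case: (ltngtP c c') => // h; first exact: W.
  by apply/esym/W.
have hd : c < d by lia.
have := congr1 (fun f : {ffun 'I_d -> bool} => f (Ordinal hd)) e; rewrite !ffunE /= leqnn.
by rewrite leqNgt lt.
Qed.

Lemma Match_tail d x w : Match d x w -> forall n, size w < n -> Ssum x n = d.
Proof.
case=> _ h2 h3; elim=> // n IH hn.
case: (ltnP (size w) n) => h.
  by rewrite SsumS IH // h3 // addn0.
have -> : n = size w by lia.
exact: h2.
Qed.

Lemma Match_le d x w : Match d x w -> forall n, Ssum x n <= d.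
Proof.
move=> hm n; rewrite -(Match_tail hm (ltnSn (size w))).
case: (leqP n (size w).+1) => h; first exact: Ssum_mono.
by rewrite (Match_tail hm (ltnW h)) (Match_tail hm (ltnSn _)).
Qed.

Lemma Match_S d x x' w : Match d x w -> Match d x' w -> forall n, Ssum x n = Ssum x' n.
Proof.
move=> hm hm'; case=> [|n]; first by rewrite !Ssum0.
case: (ltnP n (size w)) => h.
  have [h1 _ _] := hm; have [h1' _ _] := hm'.
  have [e1 l1] := h1 n h; have [e1' l1'] := h1' n h.
  by apply: (lam_inj (ltnW l1) (ltnW l1')); rewrite -e1 -e1'.
by rewrite (Match_tail hm) ?(Match_tail hm') // ltnS.
Qed.

Lemma Match_pv d x x' w : Match d x w -> Match d x' w -> forall p, pv (x p) = pv (x' p).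
Proof.
move=> hm hm' p; have := Match_S hm hm' p.+1; rewrite !SsumS (Match_S hm hm' p).
by move/eqP; rewrite eqn_add2l => /eqP.
Qed.

Lemma Match_word d x w1 w2 : Match d x w1 -> Match d x w2 -> w1 = w2.
Proof.
move=> hm1 hm2.
have hs : size w1 = size w2.
  have [h1 h2 _] := hm1; have [h1' h2' _] := hm2.
  case: (ltngtP (size w1) (size w2)) => // h.
    by have [_ l] := h1' _ h; rewrite h2 ltnn in l.
  by have [_ l] := h1 _ h; rewrite h2' ltnn in l.
apply: (eq_from_nth (x0 := lam d 0) hs) => j hj.
have [h1 _ _] := hm1; have [h1' _ _] := hm2.
have hj2 : j < size w2 by rewrite -hs.
by have [-> _] := h1 j hj; have [-> _] := h1' j hj2.
Qed.

Lemma Match_exists d x N : (forall p, N <= p -> pv (x p) = 0) -> Ssum x N = d ->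
  exists w, Match d x w.
Proof.
move=> hN hS.
have hge : forall n, N <= n -> Ssum x n = d.
  move=> n h; rewrite -(subnKC h); elim: (n - N) => [|k IH]; first by rewrite addn0.
  by rewrite addnS SsumS IH hN ?addn0 // leq_addr.
have hle : forall n, Ssum x n <= d.
  move=> n; case: (leqP n N) => h; first by rewrite -hS Ssum_mono.
  by rewrite hge // ltnW.
have ex : exists j, Ssum x j.+1 == d by exists N; rewrite hge.
pose P := ex_minn ex.
have [Pp hP hmin] : [/\ Ssum x P.+1 == d, P = P & forall j, Ssum x j.+1 == d -> P <= j].
  rewrite /P; case: ex_minnP => m hm hm'; split => //.
exists (mkseq (fun j => lam d (Ssum x j.+1)) P); split; rewrite ?size_mkseq.
- move=> j hj; rewrite nth_mkseq //; split => //.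
  rewrite ltn_neqAle hle andbT; apply/negP => /hmin; lia.
- exact/eqP.
- move=> p hp.
  have := hge p.+1; have e1 : Ssum x p.+1 = d.
    apply/eqP; rewrite eqn_leq hle /= -(eqP Pp); apply: Ssum_mono; lia.
  have e2 : Ssum x p = d.
    apply/eqP; rewrite eqn_leq hle /= -(eqP Pp); apply: Ssum_mono; lia.
  move: e1; rewrite SsumS e2 => /eqP; rewrite -{2}(addn0 d) eqn_add2l => /eqP //.
Qed.

Lemma Ssum_catp_lt u z z' n : n <= size u -> Ssum (catp u z) n = Ssum (catp u z') n.
Proof. move=> h; apply: Ssum_ext => p hp; apply: catp_lt; lia. Qed.

Lemma Ssum_catp_ge u z n :
  Ssum (catp u z) (size u + n) = Ssum (catp u z) (size u) + Ssum z n.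
Proof.
elim: n => [|n IH]; first by rewrite addn0 Ssum0 addn0.
by rewrite addnS SsumS IH SsumS catp_size addnA.
Qed.

Definition alpha d u z : seq {ffun 'I_d -> bool} :=
  mkseq (fun j => lam d (Ssum (catp u z) j.+1)) (size u).

Arguments alpha d u z : clear implicits.

Lemma alpha_indep d u z z' : alpha d u z = alpha d u z'.
Proof.
rewrite /alpha /mkseq; apply/eq_in_map => j; rewrite mem_iota add0n => /andP [_ h].
by rewrite (Ssum_catp_lt z z').
Qed.

Lemma Match_prefix d u z w : Match d (catp u z) w -> Ssum (catp u z) (size u) < d ->
  w = alpha d u z ++ drop (size u) w.
Proof.
move=> hm hs.
have [h1 h2 _] := hm.
have hsz : size u <= size w.
  case: (leqP (size u) (size w)) => // h.
  have := Ssum_mono (catp u z) h; rewrite h2; lia.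
rewrite -{1}(cat_take_drop (size u) w); congr (_ ++ _).
apply: (eq_from_nth (x0 := lam d 0)).
  by rewrite size_take size_mkseq; case: ltnP => //; lia.
move=> j; rewrite size_take.
have -> : (if size u < size w then size u else size w) = size u.
  by case: ifP => //; lia.
move=> hj; rewrite nth_take // /alpha nth_mkseq //.
by have [-> _] := h1 j (leq_trans hj hsz).
Qed.

Lemma Match_transfer d u u' z w :
  Match d (catp u z) (alpha d u z ++ w) ->
  Ssum (catp u' z) (size u') = Ssum (catp u z) (size u) ->
  Ssum (catp u z) (size u) < d ->
  Match d (catp u' z) (alpha d u' z ++ w).
Proof.
move=> [h1 h2 h3] hs hd.
rewrite /Match !size_cat !size_mkseq in h1 h2 h3 *; split.
- move=> j hj; rewrite nth_cat size_mkseq.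
  case: (ltnP j (size u')) => hju.
    rewrite nth_mkseq //; split => //.
    apply: leq_ltn_trans hd; rewrite -hs; apply: Ssum_mono; lia.
  have := h1 (size u + (j - size u')); rewrite nth_cat size_mkseq.
  have -> : size u + (j - size u') < size u = false by lia.
  have -> : size u + (j - size u') - size u = j - size u' by lia.
  case; first by lia.
  move=> -> ; rewrite -addnS Ssum_catp_ge -hs.
  have -> : j.+1 = size u' + (j - size u').+1 by lia.
  by rewrite Ssum_catp_ge.
- move: h2; have -> : (size u + size w).+1 = size u + (size w).+1 by lia.
  rewrite Ssum_catp_ge -hs -Ssum_catp_ge.
  by have -> : size u' + (size w).+1 = (size u' + size w).+1 by lia.
- move=> p hp.
  have := h3 (size u + (p - size u')); rewrite catp_size.
  have -> : catp u' z p = z (p - size u').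
    by rewrite /catp; case: ltnP => //; lia.
  apply; lia.
Qed.

End Match.
Arguments Match {A} pv d x w.


Lemma card_pre d n : #|[set k : 'I_d | k < n]| = minn n d.
Proof.
have h : minn n d <= d by rewrite geq_minr.
have -> : [set k : 'I_d | k < n] = [set widen_ord h k | k : 'I_(minn n d)].
  apply/setP => k; rewrite inE; apply/idP/imsetP.
  - move=> hk; have hk' : k < minn n d by rewrite leq_min hk ltn_ord.
    by exists (Ordinal hk') => //; apply: val_inj.
  - case=> k' _ ->; rewrite /=; have := ltn_ord k'; rewrite leq_min => /andP[] //.
rewrite card_imset ?card_ord //.
by move=> a b /(congr1 val) /= e; apply: val_inj.
Qed.

Lemma card_split d (v : 'I_d -> nat) j :
  #|[set k | v k < j.+1]| = #|[set k | v k < j]| + #|[set k | v k == j]|.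
Proof.
rewrite -(cardsID [set k | v k < j] [set k | v k < j.+1]).
have e1 : [set k | v k < j.+1] :&: [set k | v k < j] = [set k | v k < j].
  by apply/setP => k; rewrite !inE; lia.
have e2 : [set k | v k < j.+1] :\: [set k | v k < j] = [set k | v k == j].
  by apply/setP => k; rewrite !inE; lia.
by rewrite e1 e2.
Qed.

Section Nu.
Variables (A : finType) (pv : A -> nat).

Lemma nondec_card d (v : 'I_d -> nat) t (i : 'I_d) :
  (forall i j : 'I_d, i <= j -> v i <= v j) ->
  (#|[set k | v k < t]| <= i) = (t <= v i).
Proof.
move=> hv; apply/idP/idP => h.
- rewrite leqNgt; apply/negP => hlt.
  have : [set k : 'I_d | k < i.+1] \subset [set k | v k < t].
    apply/subsetP => k; rewrite !inE ltnS => hk.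
    exact: leq_ltn_trans (hv _ _ hk) hlt.
  move/subset_leq_card; rewrite card_pre.
  have -> : minn i.+1 d = i.+1 by apply/minn_idPl; exact: ltn_ord.
  lia.
- have : [set k | v k < t] \subset [set k : 'I_d | k < i].
    apply/subsetP => k; rewrite !inE => hk; rewrite ltnNge; apply/negP => hik.
    have := hv _ _ hik; lia.
  move/subset_leq_card; rewrite card_pre => H; apply: (leq_trans H).
  exact: geq_minl.
Qed.

Lemma nu_Ssum d (x : nat -> A) (v : 'I_d -> nat) :
  is_nu (fun p => pv (x p)) v -> forall j, Ssum pv x j = #|[set k | v k < j]|.
Proof.
case=> _ hc; elim=> [|j IH].
  rewrite Ssum0; apply/esym/eqP; rewrite cards_eq0; apply/eqP/setP => k.
  by rewrite !inE.
by rewrite SsumS IH hc card_split.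
Qed.

Lemma nu_rep d (x : nat -> A) (v : 'I_d -> nat) :
  is_nu (fun p => pv (x p)) v -> Match pv d x (rev (rep_tuple v)).
Proof.
move=> hnu; have hS := nu_Ssum hnu; have [hv hc] := hnu.
set m := maxcomp v.
have hle : forall i, v i <= m by move=> i; exact: (leq_bigmax i).
have hsz : size (rev (rep_tuple v)) = m by rewrite size_rev size_mkseq.
split; rewrite hsz.
- move=> j hj.
  have hd : 0 < d.
    case: (posnP d) => // d0; move: hj.
    by rewrite /m /maxcomp big1 // => i _; have := ltn_ord i; lia.
  rewrite nth_rev; last by rewrite size_mkseq.
  rewrite size_mkseq nth_mkseq; last by lia.
  split.
    apply/ffunP => i; rewrite !ffunE hS nondec_card //.
    have := hle i; lia.
  have hd' : d.-1 < d by lia.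
  pose i0 : 'I_d := Ordinal hd'.
  have [i1 hi1] : exists i1 : 'I_d, v i1 = m.
    rewrite /m /maxcomp (bigmax_eq_arg i0) //.
    by eexists.
  have := nondec_card (j.+1) i1 hv; rewrite hi1 hj -hS => /idP h.
  exact: leq_ltn_trans h (ltn_ord i1).
- rewrite hS; have -> : [set k | v k < m.+1] = [set: 'I_d].
    by apply/setP => k; rewrite !inE ltnS hle.
  by rewrite cardsT card_ord.
- move=> p hp; rewrite hc; apply/eqP; rewrite cards_eq0; apply/eqP/setP => k.
  rewrite !inE; apply/negbTE/eqP; have := hle k; lia.
Qed.

Lemma nu_exists d (x : nat -> A) :
  seq_sum_eq (fun p => pv (x p)) d -> exists v : 'I_d -> nat, is_nu (fun p => pv (x p)) v.
Proof.
case=> N [hN hsum].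
have hSN : Ssum pv x N = d by [].
have hge : forall n, N <= n -> Ssum pv x n = d.
  move=> n h; rewrite -(subnKC h); elim: (n - N) => [|k IH]; first by rewrite addn0.
  by rewrite addnS SsumS IH hN ?addn0 // leq_addr.
have hSle : forall n, Ssum pv x n <= d.
  move=> n; case: (leqP n N) => h; first by rewrite -hSN Ssum_mono.
  by rewrite hge // ltnW.
have ex : forall i : 'I_d, exists n, i < Ssum pv x n.+1.
  by move=> i; exists N; rewrite hge // ltn_ord.
pose v (i : 'I_d) := ex_minn (ex i).
have key : forall (i : 'I_d) j, (v i <= j) = (i < Ssum pv x j.+1).
  move=> i j; rewrite /v; case: ex_minnP => n hn hmin.
  apply/idP/idP => h.
  - exact: leq_trans hn (Ssum_mono pv x (h : n.+1 <= j.+1)).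
  - exact: hmin.
have cnt : forall j, #|[set k | v k < j]| = Ssum pv x j.
  case=> [|j].
    rewrite Ssum0; apply/eqP; rewrite cards_eq0; apply/eqP/setP => k.
    by rewrite !inE.
  have -> : [set k | v k < j.+1] = [set k : 'I_d | k < Ssum pv x j.+1].
    by apply/setP => k; rewrite !inE ltnS key.
  by rewrite card_pre; apply/minn_idPl.
exists v; split.
- move=> i j hij; rewrite key; apply: leq_ltn_trans hij _; by rewrite -key.
- move=> j; apply/eqP; rewrite -(eqn_add2l (#|[set k | v k < j]|)) -card_split.
  by rewrite !cnt SsumS.
Qed.
End Nu.


Lemma mkseq_add (T : Type) (f : nat -> T) m n :
  mkseq f (m + n) = mkseq f m ++ mkseq (fun i => f (m + i)) n.
Proof.
rewrite /mkseq iotaD map_cat; congr (_ ++ _).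
by rewrite add0n -{1}(addn0 m) iotaDl -map_comp.
Qed.

Section LR.
Variables (A : finType) (X : (nat -> A) -> Prop) (pi : A -> 'I_#|A|).
Hypothesis pi_inj : injective pi.
Definition pvf (a : A) : nat := nat_of_ord (pi a).

Lemma pvf_inj : injective pvf.
Proof. by move=> a b /val_inj /pi_inj. Qed.

Definition Rset d (w : seq {ffun 'I_d -> bool}) : Prop :=
  exists x, X x /\ Match pvf d x w.

Definition Lset k d (w : seq {ffun 'I_d -> bool}) : Prop :=
  exists v, (exists y, [/\ letter_image pi X y, seq_sum_eq y d, d <= k & is_nu y v])
            /\ rep_tuple v = w.

Arguments Rset d w : clear implicits.
Arguments Lset k d w : clear implicits.

Lemma L_R k d w : d <= k -> (Lset k d w <-> Rset d (rev w)).
Proof.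
move=> hdk; split.
- case=> v [[y [[x [hx hy]] hs _ hnu]] <-].
  have ey : y = fun p => pvf (x p) by apply: functional_extensionality.
  subst y; exists x; split => //; exact: nu_rep hnu.
- case=> x [hx hm].
  have hs : seq_sum_eq (fun p => pvf (x p)) d.
    have [_ h2 h3] := hm.
    exists (size (rev w)).+1; split => // i hi; apply: h3; lia.
  have [v hnu] := nu_exists hs.
  exists v; split.
    by exists (fun p => pvf (x p)); split => //; exists x.
  have := Match_word (nu_rep hnu) hm.
  by move/(congr1 rev); rewrite !revK.
Qed.
End LR.
Arguments Rset {A} X pi d w.
Arguments Lset {A} X pi k d w.



Section CodToSofic.
Variables (A : finType) (X : (nat -> A) -> Prop).
Hypothesis HX : subshift X.
Variables (x0 : nat -> A).
Hypothesis hx0 : X x0.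
Variable pi : A -> 'I_#|A|.
Hypothesis pib : bijective pi.
Hypothesis Hw : weakly_one_codable_N (letter_image pi X).
Variable D : nat.
Hypothesis HD : forall y, letter_image pi X y -> seq_sum_le y D.

Let pi_inj : injective pi := bij_inj pib.
Local Notation pv := (pvf pi).

Lemma li_of x : X x -> letter_image pi X (fun p => pv (x p)).
Proof. by move=> hx; exists x. Qed.

Lemma sum_le_all x : X x -> forall n, Ssum pv x n <= D.
Proof.
move=> hx n; have [N [hN hs]] := HD (li_of hx).
case: (leqP n N) => h; first exact: leq_trans (Ssum_mono _ _ h) hs.
have -> : Ssum pv x n = Ssum pv x N.
  rewrite -(subnKC (ltnW h)); elim: (n - N) => [|k IH]; first by rewrite addn0.
  by rewrite addnS SsumS IH hN ?addn0 // leq_addr.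
exact: hs.
Qed.

Lemma support x : X x -> exists N, forall p, N <= p -> pv (x p) = 0.
Proof. move=> hx; have [N [hN _]] := HD (li_of hx); by exists N. Qed.

Let hA : 0 < #|A|.
Proof. by apply/card_gt0P; exists (x0 0). Qed.

Let o : 'I_#|A| := Ordinal hA.
Let pii : 'I_#|A| -> A := proj1_sig (constructive_indefinite_description _
   (match pib with Bijective g h1 h2 => ex_intro (fun g => cancel pi g /\ cancel g pi) g (conj h1 h2) end)).
Let pii_can : cancel pi pii /\ cancel pii pi.
Proof. rewrite /pii; by case: constructive_indefinite_description. Qed.

Let a0 := pii o.

Lemma pv0 a : pv a = 0 -> a = a0.
Proof.
move=> h; have e : pi a = o by apply: val_inj.
by rewrite /a0 -e (proj1 pii_can).
Qed.

Lemma pva0 : pv a0 = 0.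
Proof. by rewrite /pvf /a0 (proj2 pii_can). Qed.

Lemma cod_unique_periodic : unique_periodic X.
Proof.
have [Hc Hs] := HX.
have [N hN] := support hx0.
exists (fun n => x0 (N + n)); split.
- exact: shiftN N Hs hx0.
- exists 1; split => // n.
  by rewrite (pv0 (hN (N + (n + 1)) (leq_addr _ _))) (pv0 (hN (N + n) (leq_addr _ _))).
- move=> y hy [p [hp hper]] n.
  rewrite (pv0 (hN (N + n) (leq_addr n N))).
  have [Ny hNy] := support hy.
  have e : forall k, y n = y (n + k * p).
    elim=> [|k IH]; first by rewrite addn0.
    by rewrite IH mulSn [p + _]addnC addnA hper.
  rewrite (e Ny); apply: pv0; apply: hNy.
  apply: leq_trans (leq_addl _ _); rewrite leq_pmulr //.
Qed.

Let z0 : nat -> A := fun _ => a0.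

Lemma R_coded d : d <= D -> rcoded (Rset X pi d).
Proof.
move=> hd.
have reg := Hw D d.
have hL : regular (Lset X pi D d) by exact: reg.
apply: rcoded_ext (rcoded_rev (regular_rcoded hL)) => w.
by rewrite L_R // revK.
Qed.

Lemma cod_fcoded : fcoded X.
Proof.
have [Hc Hs] := HX.
have HR : forall d, exists K (f : seq {ffun 'I_d -> bool} -> 'I_K.+1),
    d <= D -> forall u v, f u = f v -> forall w, Rset X pi d (u ++ w) <-> Rset X pi d (v ++ w).
  move=> d; case: (leqP d D) => h.
    have [K [f Hf]] := rcoded_ord (R_coded h).
    exists K, (fun u => widen_ord (leqnSn K) (f u)) => _ u v huv; apply: Hf.
    by apply: val_inj; move/(congr1 val): huv.
  by exists 0, (fun _ => ord0) => h'; lia.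
pose s1 d := constructive_indefinite_description _ (HR d).
pose K d := proj1_sig (s1 d).
pose s2 d := constructive_indefinite_description _ (proj2_sig (s1 d)).
pose F d : seq {ffun 'I_d -> bool} -> 'I_(K d).+1 := proj1_sig (s2 d).
have HF : forall d, d <= D -> forall u v, F d u = F d v -> forall w,
    Rset X pi d (u ++ w) <-> Rset X pi d (v ++ w).
  by move=> d; exact: (proj2_sig (s2 d)).
pose M := \max_(d < D.+1) K d.
have KM : forall d, d <= D -> K d <= M.
  move=> d hd; exact: (leq_bigmax (F := fun d : 'I_D.+1 => K d) (Ordinal (hd : d < D.+1))).
pose s u := Ssum pv (catp u z0) (size u).
pose g (u : seq A) : bool * bool * 'I_D.+1 * {ffun 'I_D.+1 -> 'I_M.+1} :=
  (pb (X (catp u z0)), s u <= D, inord (s u),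
   [ffun e : 'I_D.+1 => inord (F (s u + e) (alpha pv (s u + e) u z0))]).
exists ((bool * bool * 'I_D.+1 * {ffun 'I_D.+1 -> 'I_M.+1})%type : finType), g.
move=> u u' E z hX.
move: E; rewrite /g; case=> e1 e2 e3 e4.
have hsu : s u = Ssum pv (catp u z) (size u).
  by rewrite /s; apply: Ssum_catp_lt.
have hsD : s u <= D by rewrite hsu sum_le_all.
have hs'D : s u' <= D by rewrite -e2 hsD.
have es : s u = s u' by move/(congr1 (@nat_of_ord _)): e3; rewrite !inordK // ltnS.
case: (pbP (exists p, pv (z p) != 0)) => [[p0 hp0] | hz].
- set x := catp u z.
  have [N hN] := support hX.
  pose d := Ssum pv x N.
  have [w hm] := Match_exists hN (erefl d).
  have hdD : d <= D := sum_le_all hX N.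
  have hsd : s u < d.
    have := Match_le hm (size u + p0.+1).
    rewrite /x Ssum_catp_ge -hsu SsumS; move: hp0; rewrite -lt0n; lia.
  have hw := Match_prefix hm (ltac:(by rewrite -hsu)).
  set w2 := drop (size u) w in hw.
  have hR : Rset X pi d (alpha pv d u z0 ++ w2).
    by exists x; split => //; rewrite (alpha_indep _ _ _ z0 z) -hw.
  have eF : F d (alpha pv d u z0) = F d (alpha pv d u' z0).
    have := congr1 (fun f : {ffun 'I_D.+1 -> 'I_M.+1} => f (inord (d - s u))) e4; rewrite !ffunE -es.
    have Ed : s u + (inord (d - s u) : 'I_D.+1) = d by rewrite inordK; lia.
    rewrite Ed; move/(congr1 (@nat_of_ord _)); rewrite !inordK; first exact: val_inj.
    + by rewrite ltnS (leq_trans _ (KM d hdD)) // -ltnS ltn_ord.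
    + by rewrite ltnS (leq_trans _ (KM d hdD)) // -ltnS ltn_ord.
  have [x' [hx' hm']] := (HF d hdD _ _ eF w2).1 hR.
  have hm2 : Match pv d (catp u' z) (alpha pv d u' z ++ w2).
    apply: (Match_transfer (u:=u)).
    + by have := hm; rewrite {1}hw.
    + by rewrite -hsu es /s; apply: Ssum_catp_lt.
    + by rewrite -hsu.
  rewrite (alpha_indep _ _ _ z z0) in hm2.
  apply: Xext hx' _ => n; apply: (pvf_inj pi_inj).
  exact: Match_pv hm' hm2 n.
- have zz : forall p, z p = a0.
    move=> p; apply: pv0; apply/eqP; apply/negPn/negP => h; apply: hz; by exists p.
  have hX0 : X (catp u z0).
    by apply: Xext hX _ => n; rewrite /catp !zz.
  have := pbE hX0; rewrite e1 => /pbP hX0'.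
  by apply: Xext hX0' _ => n; rewrite /catp !zz.
Qed.

End CodToSofic.


Section SoficToCod.
Variables (A : finType) (X : (nat -> A) -> Prop).
Hypothesis HX : subshift X.
Variables (T : finType) (g : seq A -> T).
Hypothesis Hg : forall u v, g u = g v -> forall z, X (catp u z) -> X (catp v z).
Variable xp : nat -> A.
Hypothesis hxp : X xp.
Hypothesis hper : periodic_point xp.
Hypothesis huniq : forall y, X y -> periodic_point y -> forall n, y n = xp n.

Let a := xp 0.

Lemma xp_const n : xp n = a.
Proof.
have [Hc Hs] := HX.
elim: n => // n IH; rewrite -IH.
have [p [hp hpp]] := hper.
apply: (huniq (y := fun n => xp n.+1)) => //; first exact: Hs.
by exists p; split => // m; rewrite -addSn hpp.
Qed.

Lemma per_const y : X y -> periodic_point y -> forall n, y n = a.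
Proof. by move=> hy hp n; rewrite (huniq hy hp) xp_const. Qed.

Lemma no_repeat x p p' : X x -> p < p' -> x p != a ->
  g (mkseq x p) = g (mkseq x p') -> False.
Proof.
have [Hc Hs] := HX.
move=> hx hpp hxa hg.
pose L := p' - p.
have hL : 0 < L by rewrite /L subn_gt0.
pose u1 := mkseq x p.
pose w := mkseq (fun i => x (p + i)) L.
have e12 : mkseq x p' = u1 ++ w.
  by rewrite /u1 /w -mkseq_add /L subnKC // ltnW.
pose per i := x (p + i %% L).
pose yy := catp u1 per.
pose r k := mkseq yy (p + k * L).
have hr0 : r 0 = u1.
  rewrite /r mul0n addn0 /u1 /mkseq; apply/eq_in_map => i.
  rewrite mem_iota add0n => /andP [_ hi].
  by rewrite /yy catp_mkseq.
have hrS : forall k, r k.+1 = r k ++ w.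
  move=> k; rewrite /r mulSn [L + _]addnC addnA mkseq_add; congr (_ ++ _).
  rewrite /w /mkseq; apply/eq_in_map => i.
  rewrite mem_iota add0n => /andP [_ hi].
  rewrite /yy -addnA.
  have := catp_size u1 per (k * L + i); rewrite /u1 size_mkseq => ->.
  by rewrite /per modnMDl modn_small.
have P : forall k z, X (catp u1 z) -> X (catp (r k) z).
  elim=> [|k IH] z hz; first by rewrite hr0.
  have h1 : X (catp (u1 ++ w) z) by apply: Hg hz; rewrite -e12.
  have h2 : X (catp u1 (catp w z)) by apply: Xext h1 _ => n; rewrite catp_cat.
  have h3 := IH _ h2.
  rewrite hrS; apply: Xext h3 _ => n; by rewrite catp_cat.
have hne : X (catp u1 (fun i => x (p + i))).
  by apply: Xext hx _ => n; rewrite catp_mkseq_shift.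
have hyy : X yy.
  apply: Hc => m; exists (catp (r m) (fun i => x (p + i))); split.
    exact: P.
  move=> i hi; rewrite /r catp_mkseq //.
  apply: (leq_trans hi); have : m <= m * L by rewrite leq_pmulr.
  lia.
have hper' : X per.
  have h := shiftN p Hs hyy; apply: (Xext h) => i.
  have := catp_size u1 per i; rewrite /u1 size_mkseq => <-; by [].
have pp : periodic_point per.
  by exists L; split => // n; rewrite /per modnDr.
have := per_const hper' pp 0; rewrite /per mod0n addn0 => e.
by rewrite e eqxx in hxa.
Qed.

Lemma count_le x n : X x -> #|[pred q : 'I_n | x q != a]| <= #|T|.
Proof.
move=> hx.
have inj : {in [pred q : 'I_n | x q != a] &, injective (fun q : 'I_n => g (mkseq x q))}.
  move=> q q' hq hq' e; apply: val_inj.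
  case: (ltngtP q q') => // h; exfalso.
  - exact: no_repeat hx h hq e.
  - exact: no_repeat hx h hq' (esym e).
rewrite -(card_in_imset inj); exact: max_card.
Qed.


Let hA : 0 < #|A|.
Proof. by apply/card_gt0P; exists a. Qed.
Let o : 'I_#|A| := Ordinal hA.
Let ra : 'I_#|A| := enum_rank a.
Definition sw (i : 'I_#|A|) : 'I_#|A| := if i == o then ra else if i == ra then o else i.

Lemma swK : involutive sw.
Proof.
move=> i; rewrite /sw.
case: (eqVneq i o) => [->|hio].
  by case: (eqVneq ra o) => [->|hro]; rewrite ?eqxx // eq_sym (negbTE hro).
case: (eqVneq i ra) => [->|hir].
  by rewrite eqxx.
by rewrite (negbTE hio) (negbTE hir).
Qed.

Definition piA (x : A) : 'I_#|A| := sw (enum_rank x).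

Lemma piA_bij : bijective piA.
Proof.
exists (fun i => enum_val (sw i)) => [x|i]; rewrite /piA ?swK ?enum_rankK //.
by rewrite enum_valK swK.
Qed.

Local Notation pv := (pvf piA).

Lemma pv_a : pv a = 0.
Proof.
rewrite /pvf /piA /sw -/ra.
by case: (eqVneq ra o) => [->|hro]; rewrite ?eqxx // (negbTE hro) eqxx.
Qed.

Lemma pv_lt x : pv x < #|A|.
Proof. exact: ltn_ord. Qed.

Let Bd := #|T| * #|A|.

Lemma weight_le x n : X x -> Ssum pv x n <= Bd.
Proof.
move=> hx; rewrite /Ssum (bigID (fun q : 'I_n => x q != a)) /=.
rewrite [X in _ + X]big1 ?addn0; last by move=> q /negbNE /eqP ->; exact: pv_a.
apply: (leq_trans (n := \sum_(q < n | x q != a) #|A|)).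
  by apply: leq_sum => q _; exact: ltnW (pv_lt _).
rewrite sum_nat_const /Bd leq_mul2r (count_le n hx) orbT //.
Qed.

Lemma support2 x : X x -> exists N, (forall q, N <= q -> pv (x q) = 0) /\ Ssum pv x N <= Bd.
Proof.
move=> hx.
pose P m := pb (exists n, Ssum pv x n = m).
have exP : exists m, P m by exists 0; apply: pbE; exists 0; exact: Ssum0.
have ubP : forall m, P m -> m <= Bd by move=> m /pbP [n <-]; exact: weight_le.
case: (ex_maxnP exP ubP) => m /pbP [N hN] hmax.
exists N; split; last by rewrite hN; exact: ubP (pbE (ex_intro _ N hN)).
move=> q hq.
have h1 : Ssum pv x q.+1 <= m by apply: hmax; apply: pbE; exists q.+1.
have h2 : m <= Ssum pv x q by rewrite -hN; exact: Ssum_mono.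
move: h1; rewrite SsumS; lia.
Qed.

Lemma pv_inj : injective pv.
Proof. apply: pvf_inj; exact: bij_inj piA_bij. Qed.

Lemma pv0a x : pv x = 0 -> x = a.
Proof. by move=> h; apply: pv_inj; rewrite h pv_a. Qed.

Let z0 : nat -> A := fun _ => a.

Definition consis d u (w : seq {ffun 'I_d -> bool}) :=
  w = alpha pv d u z0 /\ Ssum pv (catp u z0) (size u) < d.

Definition ur d (w : seq {ffun 'I_d -> bool}) : seq A :=
  match excluded_middle_informative (exists u, consis u w) with
  | left H => proj1_sig (constructive_indefinite_description _ H)
  | right _ => [::]
  end.

Lemma ur_spec d (w : seq {ffun 'I_d -> bool}) : (exists u, consis u w) -> consis (ur w) w.
Proof.
move=> H; rewrite /ur; case: excluded_middle_informative => [H'|//].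
by case: constructive_indefinite_description.
Qed.

Lemma consis_unique d u u' (w : seq {ffun 'I_d -> bool}) :
  consis u w -> consis u' w -> u = u'.
Proof.
move=> [hw hs] [hw' hs'].
have hsz : size u = size u'.
  by have := congr1 size hw; rewrite hw' /alpha !size_mkseq.
have SS : forall n, n <= size u -> Ssum pv (catp u z0) n = Ssum pv (catp u' z0) n.
  case=> [|j] hj; first by rewrite !Ssum0.
  have e : nth (lam d 0) (alpha pv d u z0) j = nth (lam d 0) (alpha pv d u' z0) j.
    by rewrite -hw -hw'.
  rewrite /alpha !nth_mkseq -?hsz // in e.
  apply: lam_inj e.
  - by apply: ltnW; apply: leq_ltn_trans hs; exact: Ssum_mono.
  - by apply: ltnW; apply: leq_ltn_trans hs'; apply: Ssum_mono; rewrite -hsz.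
apply: (eq_from_nth (x0 := a) hsz) => j hj.
apply: pv_inj.
have := SS j.+1 hj; rewrite !SsumS SS ?(ltnW hj) // => /eqP; rewrite eqn_add2l => /eqP.
by rewrite /catp hj -hsz hj.
Qed.

Lemma R_coded2 d : rcoded (Rset X piA d).
Proof.
pose s (u : seq A) := Ssum pv (catp u z0) (size u).
pose h (w : seq {ffun 'I_d -> bool}) : option (bool * 'I_d.+1 * T) :=
  if w is [::] then None
  else Some (pb (exists u, consis u w), inord (s (ur w)), g (ur w)).
exists (option (bool * 'I_d.+1 * T) : finType), h.
suff H : forall w1 w2, h w1 = h w2 -> forall w',
    Rset X piA d (w1 ++ w') -> Rset X piA d (w2 ++ w').
  by move=> u v huv w; split; [exact: H | exact: H (esym huv) w].
move=> w1 w2 E w' [x [hx hm]].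
case: w1 E hm => [|b1 w1'] E hm.
  by case: w2 E => // _; exists x.
case: w2 E => // b2 w2' E.
set w1 := b1 :: w1' in hm E; set w2 := b2 :: w2' in E *.
rewrite /h /= in E; case: E => e1 e2 e3.
pose u1 := mkseq x (size w1).
have [hm1 hm2 hm3] := hm.
have hc1 : consis u1 w1.
  split.
    apply: (eq_from_nth (x0 := lam d 0)); first by rewrite /alpha !size_mkseq.
    move=> j hj.
    have hj' : j < size (w1 ++ w') by rewrite size_cat ltn_addr.
    have [e _] := hm1 j hj'; rewrite nth_cat hj in e.
    rewrite e /alpha nth_mkseq /u1 ?size_mkseq //; congr lam.
    by apply: Ssum_ext => q hq; rewrite catp_mkseq //; lia.
  have hj' : size w1' < size (w1 ++ w') by rewrite size_cat /w1 /= ltn_addr.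
  have [_ l] := hm1 _ hj'.
  rewrite /u1 size_mkseq (@Ssum_ext _ pv _ x) //.
  by move=> q hq; rewrite catp_mkseq.
have ex1 : exists u, consis u w1 by exists u1.
have hU1 := ur_spec ex1.
have ex2 : exists u, consis u w2.
  by apply/pbP; rewrite -e1; apply: pbE.
have hU2 := ur_spec ex2.
set U1 := ur w1 in hU1 e2 e3; set U2 := ur w2 in hU2 e2 e3.
have eU : U1 = u1 := consis_unique hU1 hc1.
have es : s U1 = s U2.
  move/(congr1 (@nat_of_ord _)): e2; rewrite !inordK //.
  - by rewrite ltnW // ltnS; case: hU2.
  - by rewrite ltnW // ltnS; case: hU1.
pose z := fun i => x (size w1 + i).
have ex : x = catp U1 z.
  apply: functional_extensionality => n; rewrite eU /u1.
  by rewrite catp_mkseq_shift.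
rewrite ex in hx hm.
have hX2 : X (catp U2 z) := Hg e3 hx.
exists (catp U2 z); split => //.
have [hw1 hs1] := hU1; have [hw2 hs2] := hU2.
rewrite hw2 (alpha_indep _ _ _ z0 z).
apply: (Match_transfer (u := U1)).
- by rewrite -(alpha_indep _ _ _ z0 z) -hw1.
- rewrite (Ssum_catp_lt _ z z0) // (Ssum_catp_lt (u := U1) _ z z0) //.
- by rewrite (Ssum_catp_lt _ z z0).
Qed.

Lemma sofic_codable : one_codable X.
Proof.
exists piA; split; first exact: piA_bij.
split.
- move=> k d; have [hdk|hdk] : d <= k \/ k < d by lia.
  + rewrite /one_recognizable.
    apply: (regular_ext (L := fun w => Rset X piA d (rev w))).
      by move=> w; symmetry; apply: L_R.
    by apply: rcoded_regular; apply: rcoded_rev; exact: R_coded2.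
  + exists 1, ord0, (fun q _ => q), pred0 => w; split => //.
    by case=> v [[y [_ _ h _]] _]; lia.
- exists Bd => y [x [hx hy]].
  have [N [hN hS]] := support2 hx.
  exists N; split.
    by move=> i hi; rewrite hy; exact: hN.
  by rewrite (eq_bigr (fun i : 'I_N => pv (x i))) // => i _; rewrite hy.
Qed.

End SoficToCod.



Theorem mainTheorem14 (A : finType) (X : (nat -> A) -> Prop) :
  subshift X -> (exists x, X x) ->
  ((sofic X /\ unique_periodic X) <-> one_codable X).
Proof.
move=> HX [x0 hx0]; split.
- case=> hs [xp [hxp hper huniq]].
  have [T [g Hg]] := sofic_fcoded hs.
  exact: (sofic_codable HX Hg hxp hper huniq).
- case=> pi [pib [Hw [D HD]]]; split.
  + exact: (fcoded_sofic HX (cod_fcoded HX x0 pib Hw HD)).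
  + exact: (cod_unique_periodic HX hx0 pib HD).
Qed.
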